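(* Let $m>0$ and $n\ge 0$ be integers. Then the diameter of ${\rm SR}(m,n)$ is $\min(m-1,n)$.
   Context: ${\rm SR}(m,n)$ is the graph whose vertices are the vectors in $\{0,1,2,\dots\}^m$ with coordinate sum $n$, two vertices being adjacent when they differ in precisely two coordinate positions. *)

(* Defs.v *)
From mathcomp Require Import all_boot.
Set Implicit Arguments. Unset Strict Implicit. Unset Printing Implicit Defensive.

(* Vertices of SR(m,n): vectors in N^m with coordinate sum n.  Since the sum is
   n, every coordinate is at most n, so coordinates are taken in 'I_n.+1
   without loss. *)
Definition SRvert (m n : nat) :=
  {f : {ffun 'I_m -> 'I_n.+1} | \sum_(i < m) (f i : nat) == n}.

Definition coord (m n : nat) (x : SRvert m n) (i : 'I_m) : nat := val x i.

Definition SRadj (m n : nat) : rel (SRvert m n) :=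
  fun x y => #|[set i : 'I_m | coord x i != coord y i]| == 2.

Definition walk_of_len (T : eqType) (e : rel T) (x y : T) (k : nat) : Prop :=
  exists p : seq T, [/\ path e x p, last x p = y & size p = k].

Definition dist_le (T : eqType) (e : rel T) (x y : T) (k : nat) : Prop :=
  exists2 j, j <= k & walk_of_len e x y j.

Definition has_diameter (T : finType) (e : rel T) (d : nat) : Prop :=
  (forall x y : T, dist_le e x y d) /\
  (exists x y : T, forall j, walk_of_len e x y j -> d <= j).

(* Main.v *)
Require Import Defs.
From mathcomp Require Import all_boot.
From mathcomp Require Import zify.

Section SR.
Variables m n : nat.
Local Notation V := (SRvert m n).

Lemma coord_sum (x : V) : \sum_(i < m) coord x i = n.
Proof. by apply/eqP; exact: (valP x). Qed.

Lemma coord_le (x : V) i : coord x i <= n.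
Proof. by rewrite /coord -ltnS ltn_ord. Qed.

Lemma coord_inj (x y : V) : (forall i, coord x i = coord y i) -> x = y.
Proof. move=> H; apply: val_inj; apply/ffunP => i; apply: val_inj; exact: H. Qed.

Lemma le_sum_eq (f g : 'I_m -> nat) : (forall k, f k <= g k) ->
  \sum_(k < m) f k = \sum_(k < m) g k -> forall k, f k = g k.
Proof.
move=> Hle Hs k; apply/eqP; rewrite eqn_leq Hle /=; apply/negP => /negP; rewrite -ltnNge => Hlt.
move: Hs; rewrite (bigD1 k) //= (bigD1 k (P:=xpredT)) //=.
have : \sum_(i < m | i != k) f i <= \sum_(i < m | i != k) g i by apply: leq_sum.
move=> H1 E; have := leq_add Hlt H1; rewrite addSn E ltnn //.
Qed.

Definition mkv (h : 'I_m -> nat) (Hb : forall k, h k < n.+1) (Hs : \sum_(k < m) h k = n) : V.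
Proof.
exists [ffun k => Ordinal (Hb k)].
apply/eqP; apply: etrans Hs; apply: eq_bigr => i _; by rewrite ffunE.
Defined.

Lemma coord_mkv h Hb Hs k : coord (@mkv h Hb Hs) k = h k.
Proof. by rewrite /coord /= ffunE. Qed.

Lemma sum_ind (i : 'I_m) a : \sum_(k < m) ((k == i) * a) = a.
Proof. by rewrite (bigD1 i) //= eqxx mul1n big1 ?addn0 // => k /negbTE ->. Qed.

Definition Dif (x y : V) := #|[set k | coord x k != coord y k]|.
Definition Pos (x y : V) := \sum_(k < m) (coord x k - coord y k).

Lemma step (x y : V) : x <> y -> exists z : V,
  [/\ SRadj x z, Dif z y < Dif x y, Pos z y < Pos x y & 2 <= Dif x y].
Proof.
move=> Hxy.
have [i Hi|Hn] := pickP (fun i => coord y i < coord x i); last first.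
  exfalso; apply: Hxy; apply: coord_inj; apply: le_sum_eq; last by rewrite !coord_sum.
  by move=> k; have := Hn k; rewrite /= ltnNge => /negbFE.
have [j Hj|Hn] := pickP (fun i => coord x i < coord y i); last first.
  exfalso; apply: Hxy; apply: coord_inj => k; symmetry; move: k.
  apply: le_sum_eq; last by rewrite !coord_sum.
  by move=> k; have := Hn k; rewrite /= ltnNge => /negbFE.
have Hij : i != j by apply/eqP => E; move: Hi Hj; rewrite E; lia.
pose a := minn (coord x i - coord y i) (coord y j - coord x j).
have Ha1 : 0 < a by rewrite /a; lia.
have Ha2 : a <= coord x i - coord y i by rewrite /a; lia.
have Ha3 : a <= coord y j - coord x j by rewrite /a; lia.
have Ha4 : a = coord x i - coord y i \/ a = coord y j - coord x j by rewrite /a; lia.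
clearbody a.
pose h k := if k == i then coord x i - a else if k == j then coord x j + a else coord x k.
have Hb : forall k, h k < n.+1.
  move=> k; rewrite /h; have := coord_le x k; have := coord_le y j.
  case: eqP => [->|_]; first lia. case: eqP => [->|_]; lia.
have Hs : \sum_(k < m) h k = n.
  have E : forall k, h k + (k == i) * a = coord x k + (k == j) * a.
    move=> k; rewrite /h; case: (eqVneq k i) => [->|ki].
      rewrite (negbTE Hij) /=; lia.
    case: (eqVneq k j) => [->|kj] /=; lia.
  have : \sum_(k < m) (h k + (k == i) * a) = \sum_(k < m) (coord x k + (k == j) * a).
    by apply: eq_bigr => k _; exact: E.
  rewrite !big_split /= !sum_ind coord_sum; lia.
pose z := @mkv h Hb Hs. exists z.
have Cz : forall k, coord z k = h k by move=> k; apply: coord_mkv.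
split.
- rewrite /SRadj.
  have -> : [set k | coord x k != coord z k] = [set i; j].
    apply/setP => k; rewrite !inE Cz /h; case: (eqVneq k i) => [->|ki] /=.
      apply/eqP; lia.
    case: (eqVneq k j) => [->|kj] /=; first (apply/eqP; lia).
    by rewrite eqxx.
  by rewrite cards2 Hij.
- apply: proper_card; apply/properP; split.
    apply/subsetP => k; rewrite !inE Cz /h.
    case: (eqVneq k i) => [->|ki]; first by move=> _; apply/eqP; lia.
    case: (eqVneq k j) => [->|kj] //; by move=> _; apply/eqP; lia.
  case: Ha4 => Ha4.
    exists i; rewrite !inE ?Cz /h ?eqxx; first (apply/eqP; lia).
    apply/negP => /eqP; lia.
  exists j; rewrite !inE ?Cz /h ?eqxx; first (apply/eqP; lia).
  have Hji : j != i by rewrite eq_sym.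
  rewrite (negbTE Hji) negbK; apply/eqP; lia.
- have E : forall k, (h k - coord y k) + (k == i) * a = coord x k - coord y k.
    move=> k; rewrite /h; case: (eqVneq k i) => [->|ki] /=; first lia.
    case: (eqVneq k j) => [->|kj] /=; lia.
  have : \sum_(k < m) ((h k - coord y k) + (k == i) * a) = \sum_(k < m) (coord x k - coord y k).
    by apply: eq_bigr => k _; exact: E.
  have -> : Pos z y = \sum_(k<m) (h k - coord y k) by apply: eq_bigr => k _; rewrite Cz.
  rewrite big_split /= sum_ind /Pos.
  by move=> <-; rewrite -[X in X < _]addn0 ltn_add2l.
- have : [set i; j] \subset [set k | coord x k != coord y k].
    apply/subsetP => k; rewrite !inE => /orP[]/eqP->; apply/eqP; lia.
  move/subset_leq_card; by rewrite cards2 Hij.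
Qed.


Lemma upper k : forall x y : V, (Dif x y <= k.+1) || (Pos x y <= k) ->
  dist_le (@SRadj m n) x y k.
Proof.
elim: k => [|k IHk] x y H; (case: (eqVneq x y) => [->|Hxy];
  [by exists 0 => //; exists [::]; split|]);
  have [z [Hxz Hd Hp H2]] := @step x y (elimN eqP Hxy).
  by exfalso; move: H Hd Hp H2; move: (Dif x y) (Pos x y) (Dif z y) (Pos z y) => ????; lia.
have : (Dif z y <= k.+1) || (Pos z y <= k).
  by move: H Hd Hp H2; move: (Dif x y) (Pos x y) (Dif z y) (Pos z y) => ????; lia.
move=> /IHk [j Hj [p [Hpa Hl Hs]]].
exists j.+1 => //; exists (z :: p); split => //=; first by rewrite Hxz.
by rewrite Hs.
Qed.

Lemma Dif_le x y : Dif x y <= m.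
Proof. by rewrite /Dif -[X in _ <= X]card_ord max_card. Qed.

Lemma Pos_le x y : Pos x y <= n.
Proof.
rewrite /Pos; apply: leq_trans (eq_leq (coord_sum x)); apply: leq_sum => k _; exact: leq_subr.
Qed.

Lemma upper_all (hm : 0 < m) x y : dist_le (@SRadj m n) x y (minn m.-1 n).
Proof.
apply: upper; have := Dif_le x y; have := Pos_le x y.
move: (Dif x y) (Pos x y) => D P H1 H2.
case: (leqP m.-1 n) => H.
  by apply/orP; left; lia.
by apply/orP; right.
Qed.

Definition pot (x : V) := \sum_(k < m) ((0 < k) && (coord x k != 0) : nat).

Lemma pot_step x z : SRadj x z -> pot z <= (pot x).+1.
Proof.
move=> Hxz.
pose c k := (coord x k == 0) && (coord z k != 0).
have H1 : pot z <= pot x + \sum_(k < m) (c k : nat).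
  rewrite /pot -big_split /=; apply: leq_sum => k _; rewrite /c.
  by case: (0 < k); case: eqP; case: eqP.
have H2 : \sum_(k < m) (c k : nat) <= 1.
  have -> : \sum_(k < m) (c k : nat) = #|[set k | c k]|.
    rewrite -sum1_card [RHS]big_mkcond /=; apply: eq_bigr => k _; rewrite inE.
    by case: (c k).
  rewrite leqNgt; apply/negP => Hc.
  move: Hxz; rewrite /SRadj => /eqP HD.
  set D := [set i | coord x i != coord z i] in HD.
  have sub : [set k | c k] \subset D.
    apply/subsetP => k; rewrite !inE /c => /andP[/eqP -> ]; by rewrite eq_sym.
  have eqAD : [set k | c k] = D.
    apply/eqP; rewrite eqEcard sub HD; exact: Hc.
  have Hle : forall k, coord x k <= coord z k.
    move=> k; case: (boolP (k \in D)) => [|].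
      by rewrite -eqAD inE /c => /andP[/eqP -> _].
    by rewrite inE negbK => /eqP ->.
  have Heq := @le_sum_eq _ _ Hle (etrans (coord_sum x) (esym (coord_sum z))).
  have : D = set0 by apply/setP => k; rewrite !inE Heq eqxx.
  by move=> D0; move: HD; rewrite D0 cards0.
move: H1 H2; move: (pot z) (pot x) (\sum_(k < m) (c k : nat)) => ???; lia.
Qed.

Lemma pot_walk p : forall x, path (@SRadj m n) x p -> pot (last x p) <= pot x + size p.
Proof.
elim: p => [|z p IH] x /=; first by rewrite addn0.
move=> /andP[Hxz Hp]; have := IH z Hp; have := @pot_step x z Hxz.
move: (pot _) (pot _) (pot _) => ???; lia.
Qed.

End SR.

Lemma sum_lt N d : \sum_(i < N) (i < d : nat) = minn N d.
Proof.
elim: N => [|N IH]; first by rewrite big_ord0 min0n.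
rewrite big_ord_recr /= IH; case: ltnP => H; lia.
Qed.

Theorem proposition8 (m n : nat) (hm : 0 < m) :
  has_diameter (@SRadj m n) (minn m.-1 n).
Proof.
split; first exact: upper_all.
case: m hm => [//|m'] _ /=.
set d := minn m' n.
pose h0 (k : 'I_m'.+1) := if (k : nat) == 0 then n else 0.
have Hb0 : forall k, h0 k < n.+1 by move=> k; rewrite /h0; case: eqP.
have Hs0 : \sum_(k < m'.+1) h0 k = n by rewrite big_ord_recl /= big1 ?addn0.
pose h1 (k : 'I_m'.+1) := if (k : nat) == 0 then n - d else ((k : nat) <= d : nat).
have Hb1 : forall k, h1 k < n.+1.
  move=> k; rewrite /h1; case: eqP => Hk; first lia.
  case: (leqP k d) => H /=; rewrite /d in H *; lia.
have Hs1 : \sum_(k < m'.+1) h1 k = n.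
  rewrite big_ord_recl /= /h1 /=.
  rewrite (eq_bigr (fun i : 'I_m' => (i < d : nat))) //.
  rewrite sum_lt /d; lia.
exists (@mkv _ _ h0 Hb0 Hs0), (@mkv _ _ h1 Hb1 Hs1) => j [p [Hp Hl Hs]].
have := @pot_walk m'.+1 n p _ Hp; rewrite Hl Hs.
have E0 : @pot _ _ (@mkv _ _ h0 Hb0 Hs0) = 0.
  rewrite /pot big1 // => k _; rewrite coord_mkv /h0.
  by case: (eqVneq (k : nat) 0) => [Hk|Hk] /=; [rewrite Hk | rewrite andbF].
have E1 : @pot _ _ (@mkv _ _ h1 Hb1 Hs1) = d.
  rewrite /pot big_ord_recl /= add0n.
  rewrite (eq_bigr (fun i : 'I_m' => (i < d : nat))); last first.
    by move=> i _; rewrite coord_mkv /h1 /=; case: (i < d).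
  rewrite sum_lt /d; lia.
move=> H; rewrite -E1 -[j]add0n -E0; exact: H.
Qed.
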